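(* $\bigcup_k\mathfrak{L}(\mathrm{rtDBVA}(k))=\mathsf{S}^=_{\mathbb{Q}}$.
   Context: $\mathfrak{L}(A)$ denotes the class of languages recognized by machines of type $A$; the union ranges over $k\ge1$. A real-time deterministic blind vector automaton of dimension $k$ ($\mathrm{rtDBVA}(k)$) is a 6-tuple $(Q,\Sigma,\delta,q_0,Q_a,v)$ with finite state set $Q$, initial state $q_0$, accept states $Q_a$, initial row vector $v\in\mathbb{Q}^k$ (freely chosen), and $\delta:Q\times(\Sigma\cup\{\cent,\$\})\to Q\times S$, $S$ the set of $k\times k$ rational matrices; the input $w$ is read as $\cent w\$$ left to right, one symbol per step, and $\delta(q,\sigma)=(q',M)$ means that in state $q$ reading $\sigma$ the machine goes to $q'$ and multiplies its row vector on the right by $M$. The input is accepted iff after processing $\$$ the state is in $Q_a$ and the first vector entry equals $1$. A Turakainen finite automaton (TuFA) is $\mathcal{G}=(Q,\Sigma,\{A_\sigma\}_{\sigma\in\Sigma},v_0,f)$ where the $A_\sigma$ are $|Q|\times|Q|$ rational matrices, $v_0$ is a rational row vector and $f$ a rational column vector; for $w=w_1\cdots w_n\in\Sigma^*$, $f_{\mathcal{G}}(w)=v_0A_{w_1}\cdots A_{w_n}f$. $\mathsf{S}^=_{\mathbb{Q}}$ is the class of all languages of the form $\{w\in\Sigma^*\mid f_{\mathcal{G}}(w)=\lambda\}$ for some TuFA $\mathcal{G}$ and some $\lambda\in\mathbb{Q}$. *)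

(* Defs.v *)
From HB Require Import structures.
From mathcomp Require Import all_boot all_order all_algebra.
Set Implicit Arguments. Unset Strict Implicit. Unset Printing Implicit Defensive.
Import GRing.Theory Num.Theory.
Local Open Scope ring_scope.

Inductive tsym (S : Type) : Type :=
| Cent : tsym S
| Dollar : tsym S
| Sym : S -> tsym S.
Arguments Cent {S}. Arguments Dollar {S}.

(* Real-time deterministic blind vector automaton of dimension k.+1 (i.e. dimension >= 1),
   with finite state set Q, over input alphabet S.  The vector entries are rationals. *)
Record rtDBVA (S : Type) (Q : finType) (k : nat) := RtDBVA {
  dbva_delta : Q -> tsym S -> Q * 'M[rat]_(k.+1);
  dbva_q0 : Q;
  dbva_acc : {set Q};
  dbva_v : 'rV[rat]_(k.+1)
}.

Definition dbva_step S Q k (M : rtDBVA S Q k) (c : Q * 'rV[rat]_(k.+1)) (a : tsym S) :=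
  let: (q, v) := c in
  let: (q', A) := dbva_delta M q a in (q', v *m A).

Definition dbva_tape S (w : seq S) : seq (tsym S) := Cent :: rcons (map (@Sym S) w) Dollar.

Definition dbva_run S Q k (M : rtDBVA S Q k) (w : seq S) : Q * 'rV[rat]_(k.+1) :=
  foldl (dbva_step M) (dbva_q0 M, dbva_v M) (dbva_tape w).

Definition dbva_accepts S Q k (M : rtDBVA S Q k) (w : seq S) : Prop :=
  (dbva_run M w).1 \in dbva_acc M /\ (dbva_run M w).2 ord0 ord0 = 1.

(* Turakainen finite automaton with n states (Q identified with 'I_n). *)
Record TuFA (S : Type) (n : nat) := MkTuFA {
  tufa_A : S -> 'M[rat]_n;
  tufa_v0 : 'rV[rat]_n;
  tufa_f : 'cV[rat]_n
}.

Definition tufa_fun S n (G : TuFA S n) (w : seq S) : rat :=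
  (tufa_v0 G *m foldr (fun a P => tufa_A G a *m P) 1%:M w *m tufa_f G) ord0 ord0.

Definition in_union_rtDBVA (S : Type) (L : seq S -> Prop) : Prop :=
  exists (Q : finType) (k : nat) (M : rtDBVA S Q k), forall w, dbva_accepts M w <-> L w.

Definition in_S_eq_Q (S : Type) (L : seq S -> Prop) : Prop :=
  exists (n : nat) (G : TuFA S n) (lam : rat), forall w, L w <-> tufa_fun G w = lam.

(* Main.v *)
Require Import Defs.
From mathcomp Require Import all_boot all_order all_algebra.
Set Implicit Arguments. Unset Strict Implicit. Unset Printing Implicit Defensive.
Import GRing.Theory Num.Theory.
Local Open Scope ring_scope.

Lemma foldr_mul_foldl (S : Type) n (A : S -> 'M[rat]_n) (v : 'rV[rat]_n) w :
  v *m foldr (fun a P => A a *m P) 1%:M w = foldl (fun v a => v *m A a) v w.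
Proof.
elim: w v => [|a w IH] v /=; first by rewrite mulmx1.
by rewrite mulmxA IH.
Qed.

Lemma sum_enum_val (T : finType) (F : T -> rat) :
  \sum_(i < #|T|) F (enum_val i) = \sum_(x : T) F x.
Proof. by rewrite (big_enum_val (A := T) F). Qed.

Section Dir1.
Variables (S : finType) (Q : finType) (k : nat) (M : rtDBVA S Q k).
Let T := (Q * 'I_k.+1)%type.
Let n := #|{: T}|.
Let ev (i : 'I_n) : T := enum_val i.

Definition phi (c : Q * 'rV[rat]_k.+1) : 'rV[rat]_n :=
  \row_i (if (ev i).1 == c.1 then c.2 0 (ev i).2 else 0).

Definition Amat (a : S) : 'M[rat]_n :=
  \matrix_(i, j) (if (dbva_delta M (ev i).1 (Sym a)).1 == (ev j).1
                  then (dbva_delta M (ev i).1 (Sym a)).2 (ev i).2 (ev j).2 else 0).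

Definition fcol : 'cV[rat]_n :=
  \col_i (if (dbva_delta M (ev i).1 Dollar).1 \in dbva_acc M
          then (dbva_delta M (ev i).1 Dollar).2 (ev i).2 0 else 0).

Lemma sum_phi (q : Q) (G : Q -> 'I_k.+1 -> rat) :
  \sum_(i < n) (if (ev i).1 == q then G (ev i).1 (ev i).2 else 0)
  = \sum_(r < k.+1) G q r.
Proof.
rewrite (sum_enum_val (fun x : T => if x.1 == q then G x.1 x.2 else 0)).
rewrite -(pair_bigA _ (fun (q0 : Q) (r : 'I_k.+1) => if q0 == q then G q0 r else 0)) /=.
rewrite (bigD1 q) //= [X in _ + X]big1 ?addr0; last first.
  by move=> q0 /negbTE Hq; rewrite big1 // => r _; rewrite Hq.
by apply: eq_bigr => r _; rewrite eqxx.
Qed.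

Lemma phi_step c a : phi c *m Amat a = phi (dbva_step M c (Sym a)).
Proof.
case: c => q u; rewrite /dbva_step.
case E: (dbva_delta M q (Sym a)) => [q' B].
apply/rowP => j; rewrite !mxE /=.
under eq_bigr => i _ do rewrite !mxE /= (fun_if (fun x => x * _)) mul0r.
rewrite (sum_phi q (fun q0 r => u 0 r *
   (if (dbva_delta M q0 (Sym a)).1 == (ev j).1
    then (dbva_delta M q0 (Sym a)).2 r (ev j).2 else 0))).
rewrite E /= eq_sym; case: eqP => _; last by rewrite big1 // => r _; rewrite mulr0.
by [].
Qed.

Lemma phi_fcol c :
  (phi c *m fcol) 0 0 =
  if (dbva_step M c Dollar).1 \in dbva_acc M then (dbva_step M c Dollar).2 0 0 else 0.
Proof.
case: c => q u; rewrite /dbva_step.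
case E: (dbva_delta M q Dollar) => [q' B].
rewrite !mxE /=.
under eq_bigr => i _ do rewrite !mxE /= (fun_if (fun x => x * _)) mul0r.
rewrite (sum_phi q (fun q0 r => u 0 r *
   (if (dbva_delta M q0 Dollar).1 \in dbva_acc M
    then (dbva_delta M q0 Dollar).2 r 0 else 0))).
rewrite E /=; case: ifP => _; last by rewrite big1 // => r _; rewrite mulr0.
by [].
Qed.

Lemma phi_fold c w :
  foldl (fun v a => v *m Amat a) (phi c) w = phi (foldl (dbva_step M) c (map (@Sym S) w)).
Proof. by elim: w c => [|a w IH] c //=; rewrite phi_step IH. Qed.

Definition tufa_of : TuFA S n :=
  MkTuFA Amat (phi (dbva_step M (dbva_q0 M, dbva_v M) Cent)) fcol.

Lemma dir1 w : dbva_accepts M w <-> tufa_fun tufa_of w = 1.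
Proof.
rewrite /tufa_fun /= foldr_mul_foldl phi_fold phi_fcol.
rewrite /dbva_accepts /dbva_run /dbva_tape /= foldl_rcons.
case: ifP => _; first by split => [[]|].
by split => [[]|/eqP]; rewrite // eq_sym oner_eq0.
Qed.

End Dir1.

Section Dir2.
Variables (S : finType) (n : nat) (G : TuFA S n) (lam : rat).

Definition B2 (a : S) : 'M[rat]_(1 + n) := block_mx 1%:M 0 0 (tufa_A G a).
Definition D2 : 'M[rat]_(1 + n) := block_mx (1 - lam)%:M 0 (tufa_f G) 0.

Definition delta2 (q : unit) (a : tsym S) : unit * 'M[rat]_n.+1 :=
  match a with
  | Cent => (tt, 1%:M)
  | Dollar => (tt, D2)
  | Sym b => (tt, B2 b)
  end.

Definition dbva_of : rtDBVA S unit n :=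
  RtDBVA delta2 tt setT (row_mx (1 : 'M[rat]_1) (tufa_v0 G)).

Lemma B2E (v : 'rV[rat]_n) a :
  row_mx (1 : 'M[rat]_1) v *m B2 a = row_mx 1 (v *m tufa_A G a) :> 'rV_(1 + n).
Proof.
by rewrite /B2 mul_row_block !mulmx0 addr0 add0r mulmx1.
Qed.

Lemma D2E (v : 'rV[rat]_n) :
  row_mx (1 : 'M[rat]_1) v *m D2 = row_mx ((1 - lam)%:M + v *m tufa_f G) 0 :> 'rV_(1 + n).
Proof.
by rewrite /D2 mul_row_block !mulmx0 addr0 mul1mx.
Qed.

Lemma rowmx00 (X : 'M[rat]_1) (Y : 'rV[rat]_n) :
  (row_mx X Y : 'M_(1, n.+1)) 0 0 = X 0 0.
Proof.
have -> : (0 : 'I_n.+1) = lshift n (0 : 'I_1) by apply: val_inj.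
exact: row_mxEl.
Qed.

Lemma fold2 (v : 'rV[rat]_n) w :
  foldl (dbva_step dbva_of) (tt, row_mx 1 v) (map (@Sym S) w)
  = (tt, row_mx 1 (foldl (fun v a => v *m tufa_A G a) v w)).
Proof.
elim: w v => [|a w IH] v //=.
by rewrite B2E IH.
Qed.

Lemma dir2 w : dbva_accepts dbva_of w <-> tufa_fun G w = lam.
Proof.
rewrite /dbva_accepts /dbva_run /dbva_tape /= foldl_rcons mulmx1 fold2 /=.
rewrite D2E /tufa_fun foldr_mul_foldl.
rewrite rowmx00 !mxE /= in_setT mulr1n.
set s := \sum_(j < n) _.
split => [[_ H]|H]; last split => //.
- by move: H; rewrite addrC => /(canRL (addrK _)) ->; rewrite opprB addrC subrK.
- by rewrite H subrK.
Qed.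
End Dir2.

Theorem theorem10 (S : finType) (L : seq S -> Prop) :
  in_union_rtDBVA L <-> in_S_eq_Q L.
Proof.
split.
- move=> [Q [k [M HM]]].
  exists _, (tufa_of M), 1 => w; exact: (iff_trans (iff_sym (HM w)) (dir1 M w)).
- move=> [n [G [lam HG]]].
  exists unit, n, (dbva_of G lam) => w; exact: (iff_trans (dir2 G lam w) (iff_sym (HG w))).
Qed.
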